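(* Let $k\ge3$ be odd, let $G=(V,E)$ be a $k$-uniform power hypergraph, and let $\mathbf x\in\mathbb R^n$ be an H-eigenvector of its Laplacian tensor $\mathcal L$ corresponding to an H-eigenvalue $\lambda\neq1$. Let $e\in E$. (i) If $e$ has exactly one intersectional vertex $i$ and $x_s\neq0$ for some cored vertex $s\in e$, then $(1-\lambda)x_s=x_i$. (ii) If $e$ has exactly two intersectional vertices $i$ and $j$ and $x_s\neq0$ for some cored vertex $s\in e$, then $x_ix_j=(1-\lambda)x_s^2$.
   Context: A $k$-uniform power hypergraph is the $k$-th power $H^k$ of a simple graph $H=(V_H,E_H)$: for each edge $e\in E_H$ add $k-2$ new distinct vertices $i_{e,1},\ldots,i_{e,k-2}$ (different for different edges and not in $V_H$), and take as edges the sets $e\cup\{i_{e,1},\ldots,i_{e,k-2}\}$, $e\in E_H$. For a $k$-uniform hypergraph with vertex set $[n]$, $d_i$ is the number of edges containing $i$; a vertex of degree one is a cored vertex and a vertex of degree larger than one is an intersectional vertex. The Laplacian tensor $\mathcal L=\mathcal D-\mathcal A$ ($\mathcal D$ diagonal with entries $d_i$, $\mathcal A$ with entries $\frac1{(k-1)!}$ at index tuples forming an edge and $0$ otherwise) satisfies $(\mathcal L\mathbf x^{k-1})_i=d_ix_i^{k-1}-\sum_{e\ni i}\prod_{s\in e\setminus\{i\}}x_s$. A real $\lambda$ is an H-eigenvalue with H-eigenvector $\mathbf x\neq0$ if $(\mathcal L\mathbf x^{k-1})_i=\lambda x_i^{k-1}$ for all $i$. *)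

(* Defs.v *)
From mathcomp Require Import all_boot all_order all_algebra.
Set Implicit Arguments. Unset Strict Implicit. Unset Printing Implicit Defensive.
Import Order.TTheory GRing.Theory Num.Theory.
Local Open Scope ring_scope.

Definition hdeg (n : nat) (E : {set {set 'I_n}}) (i : 'I_n) : nat :=
  #|[set e in E | i \in e]|.

(* E is the k-th power H^k of a simple graph H = (VH, EH) (EH: 2-subsets of VH);
   ext f are the k-2 new vertices added to edge f (distinct for distinct
   edges, outside VH); the vertex set [n] is VH together with all new
   vertices, and the edges are f :|: ext f. *)
Definition is_power_hypergraph (n k : nat) (E : {set {set 'I_n}}) : Prop :=
  exists (VH : {set 'I_n}) (EH : {set {set 'I_n}}) (ext : {set 'I_n} -> {set 'I_n}),
    [/\ (forall f, f \in EH -> f \subset VH /\ #|f| = 2),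
        (forall f, f \in EH -> [disjoint ext f & VH] /\ #|ext f| = (k - 2)%N),
        (forall f g, f \in EH -> g \in EH -> f != g -> [disjoint ext f & ext g]),
        E = [set f :|: ext f | f in EH]
      & VH :|: \bigcup_(f in EH) ext f = setT].

Definition laplacian_apply (R : ringType) (n k : nat) (E : {set {set 'I_n}})
  (x : 'I_n -> R) (i : 'I_n) : R :=
  (hdeg E i)%:R * x i ^+ (k - 1) - \sum_(e in E | i \in e) \prod_(s in e :\ i) x s.

Definition is_H_eigenpair (R : ringType) (n k : nat) (E : {set {set 'I_n}})
  (lam : R) (x : 'I_n -> R) : Prop :=
  (exists i, x i != 0) /\
  (forall i, laplacian_apply k E x i = lam * x i ^+ (k - 1)).

(* Main.v *)
Require Import Defs.
From mathcomp Require Import all_boot all_order all_algebra.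
From mathcomp Require Import ring.
Import Order.TTheory GRing.Theory Num.Theory.
Local Open Scope ring_scope.

Lemma odd_pow_inj (R : realFieldType) (k : nat) (a b : R) :
  odd k -> a ^+ k = b ^+ k -> a = b.
Proof.
move=> ok hab.
have k0 : (0 < k)%N by case: k ok {hab}.
have e : (0 <= a) = (0 <= b).
  by rewrite -(exprn_odd_ge0 a ok) -(exprn_odd_ge0 b ok) hab.
have inj := @pexpIrn R k k0.
have [ha|ha] := boolP (0 <= a).
  have hb : 0 <= b by rewrite -e.
  by apply: inj; rewrite ?nnegrE.
have hb : ~~ (0 <= b) by rewrite -e.
have ha' : 0 <= - a by rewrite oppr_ge0 ltW // ltNge.
have hb' : 0 <= - b by rewrite oppr_ge0 ltW // ltNge.
apply: oppr_inj; apply: inj; rewrite ?nnegrE //.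
by rewrite (exprNn a) (exprNn b) hab.
Qed.

Lemma key_eq (R : realFieldType) (n k : nat) (E : {set {set 'I_n}})
  (lam : R) (x : 'I_n -> R) e t :
  (0 < k)%N -> is_H_eigenpair k E lam x -> e \in E -> t \in e -> hdeg E t = 1%N ->
  (1 - lam) * x t ^+ k = \prod_(v in e) x v.
Proof.
move=> k0 [_ H] eE te dt.
have := H t; rewrite /laplacian_apply dt.
have -> : \sum_(e' in E | t \in e') \prod_(s in e' :\ t) x s = \prod_(s in e :\ t) x s.
  rewrite (bigD1 e) /=; last by rewrite eE te.
  rewrite [X in _ + X]big1 ?addr0 // => e' /andP [/andP [e'E te'] ne'].
  move: dt; rewrite /hdeg => /eqP/cards1P [a Ha].
  have : e \in [set e0 in E | t \in e0] by rewrite inE eE te.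
  have : e' \in [set e0 in E | t \in e0] by rewrite inE e'E te'.
  by rewrite Ha !inE => /eqP h1 /eqP h2; rewrite h1 h2 eqxx in ne'.
move=> h.
rewrite (bigD1 t) //=.
have -> : \prod_(i in e | i != t) x i = \prod_(s in e :\ t) x s.
  by apply: eq_bigl => v; rewrite in_setD1 andbC.
have hP : \prod_(s in e :\ t) x s = x t ^+ (k - 1) - lam * x t ^+ (k - 1).
  by rewrite -h mul1r opprB addrC subrK.
rewrite hP.
have -> : k = (k - 1).+1 by rewrite subn1 prednK.
rewrite subSS subn0 exprS; ring.
Qed.

Lemma card_edge (n k : nat) (E : {set {set 'I_n}}) e :
  (2 <= k)%N -> is_power_hypergraph k E -> e \in E -> #|e| = k :> nat.
Proof.
move=> k2 [VH [EH [ext [h1 h2 _ hE _]]]]; rewrite hE => /imsetP [f fE ->].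
have [sf cf] := h1 f fE; have [df ce] := h2 f fE.
have I0 : f :&: ext f = set0.
  apply/eqP; rewrite -subset0 -(disjoint_setI0 df) setIC; exact: setIS.
by rewrite cardsU I0 cards0 subn0 cf ce subnKC.
Qed.

Arguments key_eq {R n k E lam x e t}.
Arguments card_edge {n k E e}.
Arguments odd_pow_inj {R k a b}.

Theorem lemma4p1 (R : realFieldType) (n k : nat) (E : {set {set 'I_n}})
  (lam : R) (x : 'I_n -> R) :
  (3 <= k)%N -> odd k ->
  is_power_hypergraph k E ->
  is_H_eigenpair k E lam x ->
  lam != 1 ->
  forall e, e \in E ->
    (forall i s : 'I_n,
        [set v in e | (1 < hdeg E v)%N] = [set i] ->
        s \in e -> hdeg E s = 1%N -> x s != 0 ->
        (1 - lam) * x s = x i) /\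
    (forall i j s : 'I_n, i != j ->
        [set v in e | (1 < hdeg E v)%N] = [set i; j] ->
        s \in e -> hdeg E s = 1%N -> x s != 0 ->
        x i * x j = (1 - lam) * x s ^+ 2).
Proof.
move=> k3 ok hP hEig hl e eE.
have k0 : (0 < k)%N by apply: leq_trans k3.
have k2 : (2 <= k)%N by apply: leq_trans k3.
have ce := card_edge k2 hP eE.
have l1 : 1 - lam != 0 by rewrite subr_eq0 eq_sym.
have deg1 : forall t, t \in e -> ~~ (1 < hdeg E t)%N -> hdeg E t = 1%N.
  move=> t te; have : (0 < hdeg E t)%N.
    by rewrite /hdeg card_gt0; apply/set0Pn; exists e; rewrite inE eE te.
  by case: (hdeg E t) => [|[|m]].
have same : forall t s, t \in e -> s \in e -> hdeg E t = 1%N -> hdeg E s = 1%N -> x t = x s.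
  move=> t s te se dt ds; apply: (odd_pow_inj ok); apply: (mulfI l1).
  by rewrite (key_eq k0 hEig eE te dt) (key_eq k0 hEig eE se ds).
split.
- move=> i s Hi se ds xs.
  have ie : i \in e.
    have : i \in [set i] by rewrite inE.
    by rewrite -Hi inE => /andP [].
  have hQ := key_eq k0 hEig eE se ds.
  rewrite (bigD1 i) //= in hQ.
  have hR : \prod_(v in e | v != i) x v = x s ^+ (k - 1).
    rewrite (eq_bigl (fun v => v \in e :\ i)); last by move=> v; rewrite in_setD1 andbC.
    rewrite (eq_bigr (fun _ => x s)); last first.
      move=> v; rewrite in_setD1 => /andP [vi ve]; apply: same => //; apply: deg1 => //.
      apply/negP => hv; have : v \in [set i] by rewrite -Hi inE ve hv.
      by rewrite inE (negbTE vi).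
    by rewrite prodr_const; congr (_ ^+ _); move: (cardsD1 i e); rewrite ie ce => ->; rewrite add1n subn1.
  rewrite hR in hQ.
  apply: (mulIf (expf_neq0 (k - 1) xs)).
  by rewrite -hQ -mulrA -exprS subn1 prednK.
- move=> i j s ij Hij se ds xs.
  have ie : i \in e.
    have : i \in [set i; j] by rewrite !inE eqxx.
    by rewrite -Hij inE => /andP [].
  have je : j \in e.
    have : j \in [set i; j] by rewrite !inE eqxx orbT.
    by rewrite -Hij inE => /andP [].
  have hQ := key_eq k0 hEig eE se ds.
  rewrite (bigD1 i) //= (bigD1 j) /= in hQ; last by rewrite je eq_sym.
  have hR : \prod_(v | (v \in e) && (v != i) && (v != j)) x v = x s ^+ (k - 2).
    rewrite (eq_bigl (fun v => v \in e :\ i :\ j)); last first.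
      by move=> v; rewrite !in_setD1; case: (v \in e); case: (v != i); case: (v != j).
    rewrite (eq_bigr (fun _ => x s)); last first.
      move=> v; rewrite !in_setD1 => /and3P [vj vi ve]; apply: same => //; apply: deg1 => //.
      apply/negP => hv; have : v \in [set i; j] by rewrite -Hij inE ve hv.
      by rewrite !inE (negbTE vi) (negbTE vj).
    rewrite prodr_const; congr (_ ^+ _).
    move: (cardsD1 i e) (cardsD1 j (e :\ i)); rewrite ie ce in_setD1 je eq_sym ij => -> ->.
    by rewrite !add1n subn2.
  rewrite hR in hQ.
  apply: (mulIf (expf_neq0 (k - 2) xs)).
  by rewrite -[RHS]mulrA -exprD subnKC // hQ mulrA.
Qed.
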